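(* Let $3\le d\le 50$, let $(\alpha,\beta)\in\mathcal{A}_d$, let $\ell>1000$ be a prime, and let $(y_1,y_2)$ be integers satisfying \[ 4\beta y_2^\ell-\alpha^2 y_1^{2\ell}=d^2-1, \] with $|y_1|\ge 2$, $y_2\ge 2$ and $y_2\ne y_1^2$. Let $A_2=\max\{y_1^2,y_2\}$. Then \[ 1\le \frac{\log A_2}{\log y_1^2}\le 1.03 . \]
   Context: For a prime $q$ let $\mu_q=\operatorname{ord}_q(d^2-1)$ and $\nu_q=\operatorname{ord}_q(d)$. To each prime $q$ associate a finite set $T_q\subset\mathbb{Z}^2$: if $q\nmid d(d^2-1)$, $T_q=\{(0,0)\}$. For $q=2$: $T_2=\{(0,1-\nu_2)\}$ if $2\mid d$; $T_2=\{(1,0),(\mu_2/2,1-\mu_2/2),(3-\mu_2,\mu_2-2)\}$ if $2\nmid d$ and $\mu_2$ is even; $T_2=\{(1,0),(3-\mu_2,\mu_2-2)\}$ if $2\nmid d$ and $\mu_2$ is odd. For odd $q\mid d$: $T_q=\{(-\nu_q,0),(0,-\nu_q)\}$. For odd $q\mid d^2-1$: $T_q=\{(0,0),(-\mu_q,\mu_q),(\mu_q/2,-\mu_q/2)\}$ if $\mu_q$ is even, and $T_q=\{(0,0),(-\mu_q,\mu_q)\}$ if $\mu_q$ is odd. Then $\mathcal{A}_d$ is the set of pairs of positive rationals $(\alpha,\beta)$ with $(\operatorname{ord}_q(\alpha),\operatorname{ord}_q(\beta))\in T_q$ for every prime $q$. *)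

(* Defs.v *)
From HB Require Import structures.
From mathcomp Require Import all_boot all_order all_algebra.
From mathcomp Require Import all_classical all_reals all_analysis.
Set Implicit Arguments. Unset Strict Implicit. Unset Printing Implicit Defensive.
Import Order.TTheory GRing.Theory Num.Theory.
Local Open Scope ring_scope.

Definition ordq (q : nat) (x : rat) : int :=
  (logn q `|numq x|%N)%:Z - (logn q `|denq x|%N)%:Z.

Definition mu (d q : nat) : nat := logn q (d ^ 2 - 1)%N.
Definition nu (d q : nat) : nat := logn q d.

Definition inT (d q : nat) (a b : int) : bool :=
  let m := (mu d q)%:Z in
  let n := (nu d q)%:Z in
  if ~~ (q %| d * (d ^ 2 - 1))%N then (a == 0) && (b == 0)
  else if q == 2%N then
    if (2 %| d)%N then (a == 0) && (b == 1 - n)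
    else if ~~ odd (mu d q) then
      [|| (a == 1) && (b == 0),
          (a == ((mu d q)./2)%:Z) && (b == 1 - ((mu d q)./2)%:Z)
        | (a == 3 - m) && (b == m - 2)]
    else ((a == 1) && (b == 0)) || ((a == 3 - m) && (b == m - 2))
  else if (q %| d)%N then
    ((a == - n) && (b == 0)) || ((a == 0) && (b == - n))
  else
    if ~~ odd (mu d q) then
      [|| (a == 0) && (b == 0),
          (a == - m) && (b == m)
        | (a == ((mu d q)./2)%:Z) && (b == - ((mu d q)./2)%:Z)]
    else ((a == 0) && (b == 0)) || ((a == - m) && (b == m)).

Definition in_Ad (d : nat) (alpha beta : rat) : Prop :=
  0 < alpha /\ 0 < beta /\
  forall q : nat, prime q -> inT d q (ordq q alpha) (ordq q beta).

(* Main.v *)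
Require Import Defs.
From HB Require Import structures.
From mathcomp Require Import all_boot all_order all_algebra.
From mathcomp Require Import all_classical all_reals all_analysis.
From mathcomp Require Import zify ring lra.
Import Order.TTheory GRing.Theory Num.Theory.
Local Open Scope ring_scope.

Lemma halfle (m : nat) : (m./2 <= m)%N.
Proof. by rewrite -{2}(odd_double_half m); lia. Qed.

Ltac crush :=
  repeat match goal with
  | H : is_true (_ || _) |- _ => case/orP: H => H
  | H : is_true (_ && _) |- _ => let H1 := fresh in let H2 := fresh in case/andP: H => H1 H2
  | H : is_true (_ == _) |- _ => move/eqP: H => H
  end; subst; lia.

Lemma inT_bound d q a b : (3 <= d)%N -> prime q -> inT d q a b ->
  a <= (logn q (2 * (d ^ 2 - 1)))%:Z /\ - b <= (logn q (d * (d ^ 2 - 1)))%:Z.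
Proof.
move=> d3 pq.
have d1 : (0 < d ^ 2 - 1)%N by rewrite subn_gt0 -mulnn (leq_trans _ (leq_mul d3 d3)).
have hm1 : (logn q (d ^ 2 - 1) <= logn q (2 * (d ^ 2 - 1)))%N.
  by apply: dvdn_leq_log; [rewrite muln_gt0 d1|apply: dvdn_mull].
have hm2 : (logn q (d ^ 2 - 1) <= logn q (d * (d ^ 2 - 1)))%N.
  by apply: dvdn_leq_log; [rewrite muln_gt0 d1; lia|apply: dvdn_mull].
have hn2 : (logn q d <= logn q (d * (d ^ 2 - 1)))%N.
  by apply: dvdn_leq_log; [rewrite muln_gt0 d1; lia|apply: dvdn_mulr].
have hh := halfle (logn q (d ^ 2 - 1)).
rewrite /inT /mu /nu.
case: ifP => Hdv.
  move=> H; crush.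
case: eqP => Hq2.
  subst q.
  have h2 : logn 2 (2 * (d ^ 2 - 1)) = (logn 2 (d ^ 2 - 1)).+1.
    by rewrite lognM // lognn.
  rewrite h2.
  case: ifP => Hd.
    move=> H; crush.
  have hm : (0 < logn 2 (d ^ 2 - 1))%N.
    rewrite logn_gt0 mem_primes d1 /=.
    by move: Hdv; rewrite Euclid_dvdM // Hd /= => /negbFE.
  case: ifP => _ H; crush.
case: ifP => Hd; [move=> H; crush|case: ifP => _ H; crush].
Qed.

Lemma dvd_of_logn m n : (0 < m)%N -> (0 < n)%N ->
  (forall p, prime p -> logn p m <= logn p n)%N -> (m %| n)%N.
Proof.
move=> m0 n0 H; apply/dvdn_partP => // p; rewrite mem_primes => /and3P[pp _ _].
by rewrite p_part pfactor_dvdn //; exact: H.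
Qed.

Lemma logn_cop q m n : prime q -> coprime m n -> (logn q m = 0)%N \/ (logn q n = 0)%N.
Proof.
move=> pq cop; case: (posnP (logn q m)) => [->|hm]; [by left|right].
apply/eqP; rewrite -leqn0 leqNgt logn_gt0 mem_primes; apply/negP => /and3P[_ _ hn].
move: hm; rewrite logn_gt0 mem_primes => /and3P[_ _ hm].
have : (q %| gcdn m n)%N by rewrite dvdn_gcd hm hn.
by rewrite (eqP cop) dvdn1 => /eqP q1; rewrite q1 in pq.
Qed.

Lemma num_bound (x : rat) (N : nat) : x != 0 -> (0 < N)%N ->
  (forall q, prime q -> ordq q x <= (logn q N)%:Z) -> (`|numq x| %| N)%N.
Proof.
move=> x0 N0 H; apply: dvd_of_logn => //; first by rewrite absz_gt0 numq_eq0.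
move=> p pp; have := H p pp; rewrite /ordq.
case: (logn_cop _ _ _ pp (coprime_num_den x)) => ->; lia.
Qed.

Lemma den_bound (x : rat) (N : nat) : (0 < N)%N ->
  (forall q, prime q -> - ordq q x <= (logn q N)%:Z) -> (`|denq x| %| N)%N.
Proof.
move=> N0 H; apply: dvd_of_logn => //; first by rewrite absz_gt0 denq_eq0.
move=> p pp; have := H p pp; rewrite /ordq.
case: (logn_cop _ _ _ pp (coprime_num_den x)) => ->; lia.
Qed.

Lemma rat_part (d : nat) (alpha beta : rat) (l : nat) (y1 y2 : int) :
  (3 <= d <= 50)%N ->
  in_Ad d alpha beta ->
  4 * beta * (y2%:~R) ^+ l - alpha ^+ 2 * (y1%:~R) ^+ (2 * l) = (d ^ 2 - 1)%N%:R ->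
  2 <= `|y1| -> 
  y2 ^+ l <= (d ^ 7)%:Z * (y1 ^+ 2) ^+ l.
Proof.
move=> /andP[d3 d50] [a0 [b0 HT]] Heq y12.
have d1 : (0 < d ^ 2 - 1)%N by rewrite subn_gt0 -mulnn (leq_trans _ (leq_mul d3 d3)).
have hnum : (`|numq alpha| <= 2 * (d ^ 2 - 1))%N.
  apply: dvdn_leq; first by rewrite muln_gt0 d1.
  apply: num_bound; first by rewrite gt_eqF.
    by rewrite muln_gt0 d1.
  by move=> q pq; case: (inT_bound _ _ _ _ d3 pq (HT q pq)).
have hden : (`|denq beta| <= d * (d ^ 2 - 1))%N.
  apply: dvdn_leq; first by rewrite muln_gt0 d1; lia.
  apply: den_bound; first by rewrite muln_gt0 d1; lia.
  by move=> q pq; case: (inT_bound _ _ _ _ d3 pq (HT q pq)).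
set E : rat := (d ^ 2 - 1)%N%:R.
set D : rat := d%:R.
have ED : E = D ^+ 2 - 1 by rewrite /E natrB ?natrX // -mulnn; nia.
have D3 : 3 <= D by rewrite /D (ler_nat rat 3).
have Ha : alpha <= 2 * E.
  have n0 : 0 < numq alpha by rewrite numq_gt0.
  have e1 : numq alpha * 1 = numq alpha by rewrite mulr1.
  have : numq alpha <= (2 * (d ^ 2 - 1))%N%:Z by lia.
  rewrite -(ler_int rat) => hn.
  have dd : 1 <= (denq alpha)%:~R :> rat.
    by rewrite (ler_int rat 1); have := denq_gt0 alpha; lia.
  have := numqE alpha.
  move=> he.
  have hn' : (numq alpha)%:~R <= 2 * E :> rat.
    by move: hn; rewrite -pmulrn natrM.
  rewrite he in hn'. nra.
have Hb : 1 <= beta * (D * E).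
  have n0 : 0 < numq beta by rewrite numq_gt0.
  have : denq beta <= (d * (d ^ 2 - 1))%N%:Z by have := denq_gt0 beta; lia.
  rewrite -(ler_int rat) => hn.
  have dd : 1 <= (numq beta)%:~R :> rat by rewrite (ler_int rat 1); lia.
  have := numqE beta.
  move=> he.
  rewrite -pmulrn natrM in hn.
  rewrite he in dd. rewrite -/D -/E in hn. nra.
set P : rat := ((y1 ^+ 2)%:~R) ^+ l.
set Q : rat := (y2%:~R) ^+ l.
have hP : (y1%:~R : rat) ^+ (2 * l) = P by rewrite /P exprM rmorphXn.
rewrite hP -/Q -/E in Heq.
have y1sq : 4 <= y1 ^+ 2.
  have : `|y1| ^+ 2 = y1 ^+ 2 by rewrite -normrX ger0_norm // exprn_even_ge0.
  by move=> <-; rewrite expr2 (_ : 4 = 2 * 2) //; apply: ler_pM.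
have P1 : 1 <= P.
  rewrite /P exprn_ege1 // (ler_int rat 1); lia.
have h2 : alpha ^+ 2 <= 4 * E ^+ 2 by nra.
have E0 : 0 <= E by rewrite ED; nra.
have h3 : 4 * beta * Q <= (4 * E ^+ 2 + E) * P by nra.
have Q0 : 0 <= Q by nra.
have h4 : Q <= beta * (D * E) * Q by nra.
have h5 : beta * (D * E) * Q <= (D * E / 4) * ((4 * E ^+ 2 + E) * P).
  have -> : beta * (D * E) * Q = (D * E / 4) * (4 * beta * Q) by field.
  apply: ler_wpM2l => //; nra.
have h6 : (D * E / 4) * (4 * E ^+ 2 + E) <= D ^+ 7.
  have -> : D ^+ 7 = D * (D ^+ 2) ^+ 3 by rewrite -exprM -exprS.
  have XE : D ^+ 2 = E + 1 by rewrite ED; ring.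
  have h6a : E * (4 * E ^+ 2 + E) / 4 <= (D ^+ 2) ^+ 3 by rewrite XE; nra.
  have -> : D * E / 4 * (4 * E ^+ 2 + E) = D * (E * (4 * E ^+ 2 + E) / 4) by field.
  apply: ler_wpM2l => //; lra.
have h7 : Q <= D ^+ 7 * P by nra.
rewrite -(ler_int rat) intrM !rmorphXn /= -pmulrn natrX.
by rewrite -exprM hP.
Qed.

Theorem lemma5p3 (R : realType) (d : nat) (alpha beta : rat) (l : nat)
    (y1 y2 : int) :
  (3 <= d <= 50)%N ->
  in_Ad d alpha beta ->
  prime l -> (1000 < l)%N ->
  4 * beta * (y2%:~R) ^+ l - alpha ^+ 2 * (y1%:~R) ^+ (2 * l) = (d ^ 2 - 1)%N%:R ->
  2 <= `|y1| -> 2 <= y2 -> y2 != y1 ^+ 2 ->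
  let A2 : int := Num.max (y1 ^+ 2) y2 in
  1 <= ln (A2%:~R : R) / ln ((y1 ^+ 2)%:~R : R) <= 103 / 100.
Proof.
move=> hd hA pl l1000 Heq y12 y22 yne; cbv zeta.
have C := rat_part _ _ _ _ _ _ hd hA Heq y12.
have y1sq : 4 <= y1 ^+ 2.
  have : `|y1| ^+ 2 = y1 ^+ 2 by rewrite -normrX ger0_norm // exprn_even_ge0.
  by move=> <-; rewrite expr2 (_ : 4 = 2 * 2) //; apply: ler_pM.
set Y1 : R := (y1 ^+ 2)%:~R.
set Y2 : R := y2%:~R.
have Y14 : 4 <= Y1 by rewrite /Y1 (ler_int R 4).
have Y22 : 2 <= Y2 by rewrite /Y2 (ler_int R 2).
have ln2 : 0 < ln (2 : R) by apply: ln_gt0; lra.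
have lnY1 : (ln 2 *+ 2 <= ln Y1).
  rewrite -lnXn; last by lra.
  by rewrite ler_ln ?posrE; lra.
have lnY1p : 0 < ln Y1 by lra.
case: (leP (y1 ^+ 2) y2) => h; last first.
  by rewrite -/Y1 divff ?gt_eqF //; apply/andP; split; lra.
rewrite -/Y1 -/Y2.
have hY : Y1 <= Y2 by rewrite /Y1 /Y2 ler_int.
apply/andP; split.
  rewrite ler_pdivlMr // mul1r ler_ln ?posrE; lra.
rewrite ler_pdivrMr //.
move: C; rewrite -(ler_int R) intrM !rmorphXn /= -pmulrn natrX -/Y2.
have -> : (y1%:~R : R) ^+ 2 = Y1 by rewrite /Y1 rmorphXn.
set Dr : R := d%:R.
have D3 : 3 <= Dr by rewrite /Dr (ler_nat R 3); case/andP: hd.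
have D64 : Dr <= 2 ^+ 6.
  by rewrite /Dr -natrX ler_nat; case/andP: hd => _ /leq_trans; apply.
have lnD : ln Dr <= ln 2 *+ 6.
  rewrite -lnXn; last by lra.
  by rewrite ler_ln ?posrE //; lra.
move=> C.
have L1 : ln (Y2 ^+ l) <= ln (Dr ^+ 7 * Y1 ^+ l).
  rewrite ler_ln // posrE; first by apply: exprn_gt0; lra.
  by apply: mulr_gt0; apply: exprn_gt0; lra.
rewrite lnM ?posrE ?exprn_gt0 // ?lnXn in L1; try lra.
have Lb : 1001 <= l%:R :> R by rewrite (ler_nat R 1001).
rewrite -[ln Y2 *+ l]mulr_natr -[ln Y1 *+ l]mulr_natr -[ln Dr *+ 7]mulr_natr in L1.
rewrite -[ln 2 *+ 6]mulr_natr in lnD.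
rewrite -[ln 2 *+ 2]mulr_natr in lnY1.
rewrite -(ler_pM2r (_ : 0 < l%:R :> R)); last by lra.
nra.
Qed.
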